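(* Let $K$ be a field, $P=K[x_1,\dots,x_n]$, and $\sigma$ a term ordering on $\mathbb{T}^n$. Let $J$ be an ideal in $P$ and let $F$ be a set of non-zero polynomials in $J$. Then: (a) $O_\sigma(J)=O_\sigma(F)$ if and only if $F$ is a $\sigma$-Gröbner basis of $J$; (b) if $F$ is not a $\sigma$-Gröbner basis of $J$, then $O_\sigma(J)\prec_\sigma O_\sigma(F)$.
   Context: $\mathbb{T}^n$ is the monoid of power-products in $x_1,\dots,x_n$. A tuple $(t_1,\dots,t_r)$ of distinct power-products is $\sigma$-ordered if $t_1<_\sigma\cdots<_\sigma t_r$ (the empty tuple is $\sigma$-ordered). The interreduction of a set $T$ of power-products is the set of elements of $T$ not divisible by any other element of $T$. For a set $F$ of non-zero polynomials, $O_\sigma(F)$ is the $\sigma$-ordered tuple of the interreduction of $\{\mathrm{LT}_\sigma(f):f\in F\}$. For an ideal $I$, $O_\sigma(I)$ is the $\sigma$-ordered tuple of the leading terms of a minimal $\sigma$-Gröbner basis of $I$ (equivalently, of the minimal power-product generators of $\mathrm{LT}_\sigma(I)$); it is the empty tuple if $I=0$. For $\sigma$-ordered tuples $T=(t_1,\dots,t_r)$ and $T'=(t'_1,\dots,t'_{r'})$, $T'\prec_\sigma T$ ($T'$ $\sigma$-precedes $T$) means either $T$ is a proper prefix of $T'$ (i.e. $r<r'$ and $t_i=t'_i$ for $i\le r$), or there is $k\le\min(r,r')$ with $t_i=t'_i$ for $i<k$ and $t'_k<_\sigma t_k$. *)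

(* Defs.v *)
From HB Require Import structures.
From mathcomp Require Import all_boot all_order all_algebra.
From mathcomp.multinomials Require Import mpoly.
From Stdlib Require Import ClassicalEpsilon.

Set Implicit Arguments.
Unset Strict Implicit.
Unset Printing Implicit Defensive.
Import GRing.Theory.
Local Open Scope ring_scope.

(* Power-products T^n are the monomials 'X_{1..n} (exponent vectors);
   the product of power-products is (m1 + m2)%MM, 1 is 0%MM, and
   divisibility t1 | t2 is the pointwise order (t1 <= t2)%MM. *)

Definition term_ordering (n : nat) (le : rel 'X_{1..n}) : Prop :=
  [/\ reflexive le, antisymmetric le, transitive le, total le &
   ((forall t1 t2 t : 'X_{1..n}, le t1 t2 -> le (t1 + t)%MM (t2 + t)%MM) /\
      (forall t : 'X_{1..n}, le 0%MM t))].

Definition tlt (n : nat) (le : rel 'X_{1..n}) : rel 'X_{1..n} :=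
  fun t1 t2 => (t1 != t2) && le t1 t2.

(* leading term LT_sigma(p): the sigma-largest power-product in the support
   of p (only used for p <> 0). *)
Definition LT (n : nat) (le : rel 'X_{1..n}) (K : fieldType)
    (p : {mpoly K[n]}) : 'X_{1..n} :=
  foldr (fun t acc => if le acc t then t else acc) 0%MM (msupp p).

Definition tdvd (n : nat) (t1 t2 : 'X_{1..n}) : bool := (t1 <= t2)%MM.

Definition is_ideal (n : nat) (K : fieldType) (J : {mpoly K[n]} -> Prop) : Prop :=
  [/\ J 0,
      (forall f g, J f -> J g -> J (f + g)) &
      (forall f g, J g -> J (f * g))].

(* F (a finite set of polynomials, given as a list) is a sigma-Groebner
   basis of J: F is contained in J and LT_sigma(J) is generated by the
   leading terms of the elements of F, i.e. every leading term of a
   non-zero element of J is divisible by the leading term of some element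
   of F. *)
Definition groebner_basis (n : nat) (le : rel 'X_{1..n}) (K : fieldType)
    (J : {mpoly K[n]} -> Prop) (F : seq {mpoly K[n]}) : Prop :=
  (forall f, f \in F -> J f) /\
  (forall f, J f -> f != 0 -> exists2 g, g \in F & tdvd (LT le g) (LT le f)).

Definition sigma_ordered (n : nat) (le : rel 'X_{1..n}) (s : seq 'X_{1..n}) : bool :=
  sorted (tlt le) s.

Definition interreduce (n : nat) (T : seq 'X_{1..n}) : seq 'X_{1..n} :=
  [seq t <- T | all (fun u => (u == t) || ~~ tdvd u t) T].

Definition O_set (n : nat) (le : rel 'X_{1..n}) (K : fieldType)
    (F : seq {mpoly K[n]}) : seq 'X_{1..n} :=
  sort le (undup (interreduce [seq LT le f | f <- F])).

Definition min_gen_LT (n : nat) (le : rel 'X_{1..n}) (K : fieldType)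
    (J : {mpoly K[n]} -> Prop) (t : 'X_{1..n}) : Prop :=
  (exists2 f, J f /\ f != 0 & LT le f = t) /\
  (forall g, J g -> g != 0 -> tdvd (LT le g) t -> LT le g = t).

Definition O_ideal_spec (n : nat) (le : rel 'X_{1..n}) (K : fieldType)
    (J : {mpoly K[n]} -> Prop) (s : seq 'X_{1..n}) : Prop :=
  sigma_ordered le s /\ (forall t, t \in s <-> min_gen_LT le J t).

(* O_sigma(J): the sigma-ordered tuple of the minimal generators of
   LT_sigma(J) (this tuple exists and is unique by Dickson's lemma);
   empty if J = 0. *)
Definition O_ideal (n : nat) (le : rel 'X_{1..n}) (K : fieldType)
    (J : {mpoly K[n]} -> Prop) : seq 'X_{1..n} :=
  epsilon (inhabits [::]) (O_ideal_spec le J).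

Definition precedes (n : nat) (le : rel 'X_{1..n}) (T' T : seq 'X_{1..n}) : Prop :=
  (size T < size T' /\ take (size T) T' = T)%N \/
  (exists k : nat, [/\ (k < size T)%N, (k < size T')%N,
     take k T' = take k T & tlt le (nth 0%MM T' k) (nth 0%MM T k)]).

(* Main.v *)
Require Import Defs.
From mathcomp Require Import all_boot all_order all_algebra.
From mathcomp.multinomials Require Import mpoly.
From Stdlib Require Import Classical ClassicalEpsilon.
Import Order.TTheory.

Lemma all2_leq_nth (s t : seq nat) i : all2 leq s t -> nth 0 s i <= nth 0 t i.
Proof.
elim: s t i => [|x s ih] [|y t] [|i] //= /andP[h1 h2]; last exact: ih.
by [].
Qed.

Lemma head_le_sumn (C : seq (seq nat)) c : c \in C -> head 0 c <= sumn (map (head 0) C).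
Proof.
elim: C => //= c' C ih; rewrite inE => /orP[/eqP->|/ih h]; first exact: leq_addr.
exact: leq_trans h (leq_addl _ _).
Qed.

Lemma dickson_seq n (S : seq nat -> Prop) :
  (forall s, S s -> size s = n) ->
  exists B : seq (seq nat), (forall b, b \in B -> S b) /\
    (forall s, S s -> exists2 b, b \in B & all2 leq b s).
Proof.
elim: n S => [|n IH] S HS.
  case: (classic (S [::])) => H.
    exists [:: [::]]; split; first by move=> b; rewrite inE => /eqP->.
    move=> s Ss; move: (HS s Ss); case: s Ss => // _ _; exists [::]; rewrite ?inE //.
  exists [::]; split => // s Ss; move: (HS s Ss); case: s Ss => // /H.
pose S' a := exists k, S (k :: a).
have HS' : forall a, S' a -> size a = n.
  by move=> a [k /HS] /= [].
have [B' [HB'1 HB'2]] := IH S' HS'.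
have [C [HC1 HC2]] : exists C : seq (seq nat), (forall c, c \in C -> S c) /\
    (forall b, b \in B' -> exists k, (k :: b) \in C).
  elim: B' HB'1 {HB'2} => [|b B' ih] hB; first by exists [::].
  have [C [hC1 hC2]] := ih (fun x hx => hB x (mem_behead (s:=b::B') hx)).
  have [k hk] := hB b (mem_head _ _).
  exists ((k :: b) :: C); split.
    by move=> c; rewrite inE => /orP[/eqP->|/hC1].
  move=> b'; rewrite inE => /orP[/eqP->|/hC2 [k' hk']].
    by exists k; rewrite mem_head.
  by exists k'; rewrite inE hk' orbT.
have HD : forall K, exists D : seq (seq nat), (forall d, d \in D -> S d) /\
    (forall j a, j < K -> S (j :: a) -> exists2 d, d \in D & all2 leq d (j :: a)).
  elim => [|K [D [hD1 hD2]]]; first by exists [::].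
  have [BK [hBK1 hBK2]] := IH (fun a => S (K :: a)) (fun a h => HS' a (ex_intro _ K h)).
  exists (D ++ map (cons K) BK); split.
    move=> d; rewrite mem_cat => /orP[/hD1//|/mapP[b /hBK1 hb ->]] //.
  move=> j a; rewrite ltnS leq_eqVlt => /orP[/eqP->|hj] hS.
    have [b hb1 hb2] := hBK2 a hS.
    by exists (K :: b); rewrite ?mem_cat ?map_f ?orbT //= leqnn.
  have [d hd1 hd2] := hD2 j a hj hS.
  by exists d; rewrite // mem_cat hd1.
pose K := sumn (map (head 0) C).
have [D [HD1 HD2]] := HD K.
exists (C ++ D); split.
  by move=> b; rewrite mem_cat => /orP[/HC1|/HD1].
case=> [|k a] hS; first by move: (HS _ hS).
case: (leqP K k) => hk.
  have [b hb1 hb2] := HB'2 a (ex_intro _ k hS).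
  have [kb hkb] := HC2 b hb1.
  exists (kb :: b); first by rewrite mem_cat hkb.
  by rewrite /= hb2 andbT (leq_trans (@head_le_sumn C _ hkb)).
have [d hd1 hd2] := HD2 k a hk hS.
by exists d; rewrite // mem_cat hd1 orbT.
Qed.


Fixpoint lcp (T : eqType) (s t : seq T) : nat :=
  if s is x :: s' then (if t is y :: t' then (if x == y then (@lcp T s' t').+1 else 0) else 0) else 0.
Arguments lcp {T}.

Lemma lcp_take (T : eqType) (s t : seq T) : take (lcp s t) s = take (lcp s t) t.
Proof.
elim: s t => [|x s ih] [|y t] //=; case: eqP => [->|] //=; by rewrite ih.
Qed.

Lemma lcp_size (T : eqType) (s t : seq T) : (lcp s t <= size s) && (lcp s t <= size t).
Proof.
elim: s t => [|x s ih] [|y t] //=; case: eqP => //= _; exact: ih.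
Qed.

Lemma lcp_nth (T : eqType) x0 (s t : seq T) : lcp s t < size s -> lcp s t < size t ->
  nth x0 s (lcp s t) != nth x0 t (lcp s t).
Proof.
elim: s t => [|x s ih] [|y t] //=; case: eqP => [_|/eqP h] //=; rewrite ?ltnS; try exact: ih.
Qed.

Lemma in_take_nth (T : eqType) x0 (t : seq T) k y : y \in take k t ->
  exists2 j, j < k & y = nth x0 t j.
Proof.
move=> hy.
have hj : index y (take k t) < k.
  have := index_mem y (take k t); rewrite hy size_take_min => h.
  exact: leq_trans h (geq_minl _ _).
exists (index y (take k t)) => //.
by rewrite -(nth_take x0 hj) nth_index.
Qed.

Lemma prec_generic (T : eqType) (x0 : T) (lt dv : rel T) (s t : seq T) :
  transitive lt -> irreflexive lt -> (forall a b, a != b -> lt a b || lt b a) ->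
  (forall a b, dv a b -> (a == b) || lt a b) ->
  sorted lt s -> sorted lt t -> s <> t ->
  (forall x, x \in t -> exists2 y, y \in s & dv y x) ->
  (forall x y, x \in t -> y \in t -> dv y x -> y = x) ->
  (size t < size s /\ take (size t) s = t) \/
  (exists k : nat, [/\ (k < size t), (k < size s),
     take k s = take k t & lt (nth x0 s k) (nth x0 t k)]).
Proof.
move=> ltr irr tot dvle ss st neq P1 P2.
have ut : uniq t := sorted_uniq ltr irr st.
have contr : forall j k, j < k -> k < size t -> nth x0 t j = nth x0 t k -> False.
  move=> j k hjk hk e.
  have := nth_uniq x0 (ltn_trans hjk hk) hk ut; rewrite e eqxx => /esym/eqP.
  by move=> ejk; rewrite ejk ltnn in hjk.
have htk := lcp_take _ s t; have /andP[hs ht] := lcp_size _ s t.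
have hne0 := lcp_nth _ x0 s t.
move: (lcp s t) htk hs ht hne0 => k htk hs ht hne0.
move: hs ht; rewrite [k <= size s]leq_eqVlt [k <= size t]leq_eqVlt => /orP[/eqP hs|hs] /orP[/eqP ht|ht].
- by exfalso; apply: neq; rewrite -(take_size s) -(take_size t) -hs -ht.
- exfalso; have [y ys dy] := P1 _ (mem_nth x0 ht).
  move: ys; rewrite -(take_size s) -hs htk => /(in_take_nth _ x0 _ _ _) [j hj ey].
  have yt : y \in t by rewrite ey mem_nth // (ltn_trans hj ht).
  have := P2 _ _ (mem_nth x0 ht) yt dy; rewrite ey; exact: contr.
- left; split; first by rewrite -ht.
  by rewrite ht in htk; rewrite htk take_size.
- have hne := hne0 hs ht.
  case/orP: (tot _ _ hne) => hlt; first by right; exists k.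
  exfalso; have [y ys dy] := P1 _ (mem_nth x0 ht).
  have lya : lt y (nth x0 s k).
    case/orP: (dvle _ _ dy) => [/eqP->//|h]; exact: ltr h hlt.
  move: (ys); rewrite -index_mem => hj.
  have ey := nth_index x0 ys.
  case: (ltngtP (index y s) k) => hjk.
  + have : y \in take k s by rewrite -ey -(nth_take x0 hjk) mem_nth // size_take hs /=.
    rewrite htk => /(in_take_nth _ x0 _ _ _) [j hj2 ey'].
    have yt : y \in t by rewrite ey' mem_nth // (ltn_trans hj2 ht).
    have := P2 _ _ (mem_nth x0 ht) yt dy; rewrite ey'; exact: contr.
  + have := sorted_ltn_nth ltr x0 ss; move=> /(_ k (index y s)); rewrite !inE ey.
    move=> /(_ hs hj hjk) hay; by have := ltr _ _ _ hay lya; rewrite irr.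
  + by move: lya; rewrite -hjk ey irr.
Qed.


Definition mseq n (m : 'X_{1..n}) : seq nat := tval (multinom_val m).
Arguments mseq {n}.



Lemma all2_lem n (a b : 'X_{1..n}) : all2 leq (mseq a) (mseq b) -> lem a b.
Proof.
move=> h; apply/mnm_lepP => i; rewrite (mnm_nth 0 a) (mnm_nth 0 b).
exact: all2_leq_nth.
Qed.

Lemma lem_anti n (a b : 'X_{1..n}) : lem a b -> lem b a -> a = b.
Proof.
move=> h1 h2; apply/mnmP => i; apply/eqP.
by rewrite eqn_leq (mnm_lepP h1 i) (mnm_lepP h2 i).
Qed.

Lemma tdvd_le n (le : rel 'X_{1..n}) a b : term_ordering le -> tdvd a b -> le a b.
Proof.
case=> _ _ _ _ [hc h0] hd.
have := hc 0%MM (b - a)%MM a (h0 _).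
by rewrite add0m submK.
Qed.

Lemma tlt_trans n (le : rel 'X_{1..n}) : term_ordering le -> transitive (tlt le).
Proof.
case=> _ anti tr _ _ y x z /andP[hxy lxy] /andP[hyz lyz].
apply/andP; split; last exact: tr lxy lyz.
apply/eqP => exz; move: hyz; rewrite -exz in lyz *.
by rewrite (anti y x) ?lyz ?lxy ?eqxx.
Qed.

Lemma tlt_irr n (le : rel 'X_{1..n}) : irreflexive (tlt le).
Proof. by move=> x; rewrite /tlt eqxx. Qed.

Lemma path_tlt n (le : rel 'X_{1..n}) x s :
  path le x s -> uniq (x :: s) -> path (tlt le) x s.
Proof.
elim: s x => [|y s ih] x //= /andP[lxy p] /andP[nx /andP[ny us]].
rewrite /tlt lxy andbT ih ?p //= ?ny ?us // andbT.
by apply/eqP => exy; move: nx; rewrite exy mem_head.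
Qed.

Lemma sorted_tlt_sort n (le : rel 'X_{1..n}) (l : seq 'X_{1..n}) :
  term_ordering le -> uniq l -> sorted (tlt le) (sort le l).
Proof.
case=> _ _ _ tot _ ul.
have ss := sort_sorted tot l.
have us : uniq (sort le l) by rewrite sort_uniq.
move: ss us; case: (sort le l) => //= x s; exact: path_tlt.
Qed.

Definition pb (P : Prop) : bool := if excluded_middle_informative P then true else false.

Lemma pbP (P : Prop) : reflect P (pb P).
Proof. by rewrite /pb; case: excluded_middle_informative => h; constructor. Qed.

Lemma min_div (K : fieldType) n (le : rel 'X_{1..n}) (J : {mpoly K[n]} -> Prop) t :
  (exists2 f, J f /\ f != 0%R & LT le f = t) ->
  exists2 u, min_gen_LT le J u & tdvd u t.
Proof.
move: t; apply: ltmwf => m IH Pm.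
apply: NNPP => H; apply: (H); exists m; last exact: lepm_refl.
split => // g Jg g0 dv; apply: NNPP => neq.
have lt : (LT le g < m)%O by rewrite lt_def (lem_leo dv) andbT; apply/eqP => /esym.
have [u mu du] := IH _ lt (ex_intro2 _ _ g (conj Jg g0) erefl).
apply: H; exists u => //; exact: lepm_trans du dv.
Qed.


Arguments min_div {K n le J t}.
Arguments tlt_trans {n le}.
Arguments tdvd_le {n le a b}.
Arguments lem_anti {n a b}.

Lemma O_spec_exists (K : fieldType) n (le : rel 'X_{1..n}) (J : {mpoly K[n]} -> Prop) :
  term_ordering le -> exists s, O_ideal_spec le J s.
Proof.
move=> hto.
pose P m := exists2 f, J f /\ f != 0%R & LT le f = m.
pose S s := exists2 m, s = mseq m & P m.
have HS : forall s, S s -> size s = n by move=> s [m -> _]; exact: size_tuple.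
have [B [HB1 HB2]] := dickson_seq n S HS.
have [Bm [HBm1 HBm2]] : exists Bm : seq 'X_{1..n}, (forall m, m \in Bm -> P m) /\
    (forall b, b \in B -> exists2 m, m \in Bm & b = mseq m).
  elim: B HB1 {HB2} => [|b B ih] hB; first by exists [::].
  have [Bm [h1 h2]] := ih (fun x hx => hB x (mem_behead (s:=b::B) hx)).
  have [m em Pm] := hB b (mem_head _ _).
  exists (m :: Bm); split.
    by move=> m'; rewrite inE => /orP[/eqP->|/h1].
  move=> b'; rewrite inE => /orP[/eqP->|/h2 [m' hm' e]]; first by exists m; rewrite ?mem_head.
  by exists m'; rewrite // inE hm' orbT.
exists (sort le (undup [seq m <- Bm | pb (min_gen_LT le J m)])); split.
  by apply: sorted_tlt_sort => //; exact: undup_uniq.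
move=> t; rewrite mem_sort mem_undup mem_filter; split.
  by case/andP => /pbP.
move=> mt; apply/andP; split; first by apply/pbP.
case: (mt) => Pt Hmin.
have [b hb1 hb2] := HB2 (mseq t) (ex_intro2 _ _ t erefl Pt).
have [m hm eb] := HBm2 b hb1.
have [f [Jf f0] ef] := HBm1 m hm.
have dv : tdvd (LT le f) t by rewrite ef /tdvd; apply: all2_lem; rewrite -eb.
by have := Hmin f Jf f0 dv; rewrite ef => <-.
Qed.

Local Open Scope ring_scope.

Theorem proposition4p6 (K : fieldType) (n : nat) (le : rel 'X_{1..n})
    (J : {mpoly K[n]} -> Prop) (F : seq {mpoly K[n]}) :
  term_ordering le -> is_ideal J ->
  (forall f, f \in F -> J f /\ f != 0) ->
  (O_ideal le J = O_set le F <-> groebner_basis le J F) /\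
  (~ groebner_basis le J F -> precedes le (O_ideal le J) (O_set le F)).
Proof.
move=> hto hid hF.
have spJ : O_ideal_spec le J (O_ideal le J).
  rewrite /O_ideal; apply: epsilon_spec; exact: O_spec_exists.
case: spJ => sortJ memJ.
have sortF : sorted (tlt le) (O_set le F) by apply: sorted_tlt_sort => //; exact: undup_uniq.
have memF : forall x, x \in O_set le F = (all (fun u => (u == x) || ~~ tdvd u x) [seq LT le f | f <- F]) && (x \in [seq LT le f | f <- F]).
  by move=> x; rewrite /O_set mem_sort mem_undup /interreduce mem_filter.
have memF1 : forall x, x \in O_set le F -> exists2 g, g \in F & LT le g = x.
  by move=> x; rewrite memF => /andP[_ /mapP[g hg ->]]; exists g.
have memF2 : forall x g, x \in O_set le F -> g \in F -> tdvd (LT le g) x -> LT le g = x.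
  move=> x g; rewrite memF => /andP[/allP ha _] hg dv.
  by have := ha _ (map_f (@LT n le K) hg); rewrite dv orbF => /eqP.
have memF3 : forall x, (exists2 g, g \in F & LT le g = x) ->
    (forall g, g \in F -> tdvd (LT le g) x -> LT le g = x) -> x \in O_set le F.
  move=> x [g hg eg] H; rewrite memF; apply/andP; split; last by rewrite -eg map_f.
  apply/allP => u /mapP[g' hg' ->]; case: (boolP (tdvd (LT le g') x)) => d; last by rewrite orbT.
  by rewrite (H _ hg' d) eqxx.
have partA : O_ideal le J = O_set le F <-> groebner_basis le J F.
  split.
  - move=> e; split; first by move=> f /hF [].
    move=> f Jf f0.
    have [u mu du] := @min_div K n le J (LT le f) (ex_intro2 _ _ f (conj Jf f0) erefl).
    have := memF1 u; rewrite -e => /(_ ((memJ u).2 mu)) [g hg eg].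
    by exists g; rewrite // eg.
  - move=> [GB1 GB2]; apply: (irr_sorted_eq (tlt_trans hto) (@tlt_irr _ le)) => // x.
    apply/idP/idP.
    + move=> /memJ [[f [Jf f0] <-] Hmin].
      have [g hg dg] := GB2 f Jf f0.
      apply: memF3; first by exists g => //; apply: Hmin => //; case: (hF g hg).
      by move=> g' hg' d; case: (hF g' hg') => Jg' g0'; apply: Hmin.
    + move=> hx; apply/memJ; have [g hg eg] := memF1 x hx.
      case: (hF g hg) => Jg g0; split; first by exists g.
      move=> h Jh h0 dh; have [g' hg' dg'] := GB2 h Jh h0.
      have e' := memF2 x g' hx hg' (lepm_trans dg' dh).
      by apply: lem_anti dh _; rewrite -e'.
split => // nGB.
have neq : O_ideal le J <> O_set le F by move/partA.
apply: (prec_generic _ 0%MM (tlt le) (@tdvd n)) => //.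
- exact: tlt_trans.
- exact: tlt_irr.
- move=> a b nab; case: hto => _ _ _ tot _.
  by rewrite /tlt nab eq_sym nab /=; exact: tot.
- move=> a b d; case: (eqVneq a b) => [->|nab]; first by [].
  by rewrite /tlt nab (tdvd_le hto d) orbT.
- move=> x hx; have [g hg eg] := memF1 x hx; case: (hF g hg) => Jg g0.
  have [u mu du] := @min_div K n le J x (ex_intro2 _ _ g (conj Jg g0) eg).
  by exists u => //; apply/memJ.
- move=> x y hx hy d; have [g hg eg] := memF1 y hy; rewrite -eg.
  by apply: memF2 => //; rewrite eg.
Qed.
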